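(* For any instance of MPMD or MBPMD, the connection cost $\mathrm{dist}(\mathrm{pos}(u),\mathrm{pos}(v))$ of every matching edge $(u,v)$ created by Greedy Dual is at most $2\sum_{S\subseteq V}\mathrm{sur}(S)\,y_S(T)$, where $V$ is the set of all requests and $T$ is the time at which Greedy Dual matches the last request.
   Context: Problem (MPMD / MBPMD). Let $(\mathcal{X},\mathrm{dist})$ be a metric space. An instance consists of $2m$ requests $u_1,\dots,u_{2m}$. Each request $u$ is a triple $(\mathrm{pos}(u),\mathrm{atime}(u),\mathrm{sgn}(u))$, where $\mathrm{pos}(u)\in\mathcal{X}$ is its location and $\mathrm{atime}(u)\ge0$ is its arrival time, with arrival times nondecreasing. In MPMD, $\mathrm{sgn}(u)=0$ for all requests. In MBPMD, exactly $m$ requests have sign $+1$ and $m$ have sign $-1$. At time $\tau$, an algorithm may match two arrived, unmatched requests $u,v$ with $\mathrm{sgn}(u)=-\mathrm{sgn}(v)$, at cost $\mathrm{dist}(\mathrm{pos}(u),\mathrm{pos}(v))$ (connection cost) plus $(\tau-\mathrm{atime}(u))+(\tau-\mathrm{atime}(v))$ (waiting costs). All requests must eventually be matched. Notation. Edges are unordered pairs $\{u,v\}$ of distinct requests with $\mathrm{sgn}(u)=-\mathrm{sgn}(v)$. For a set $S$ of requests, $\delta(S)$ is the set of edges with exactly one endpoint in $S$. In MPMD, $\mathrm{sur}(S)=|S|\bmod 2$; in MBPMD, $\mathrm{sur}(S)=|\sum_{u\in S}\mathrm{sgn}(u)|$. For an edge $e=(u,v)$, $\mathrm{cost}(e)=\mathrm{dist}(\mathrm{pos}(u),\mathrm{pos}(v))+|\mathrm{atime}(u)-\mathrm{atime}(v)|$.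 Algorithm Greedy Dual (GD). GD maintains a dual variable $y_S\ge0$ for every set $S$ of already-arrived requests; $y_S(\tau)$ denotes its value at time $\tau$. It also maintains a partition of the arrived requests into active sets, with $\mathcal{A}(u)$ denoting the active set containing $u$. An active set is growing if it contains at least one free request, and non-growing otherwise. - When a request $u$ arrives, $\mathcal{A}(u)\leftarrow\{u\}$ becomes a new active set, and $y_S\leftarrow 0$ for every new set $S$ containing $u$. - Tight-constraint event: while there is an edge $e=(u,v)$ between arrived requests with $\mathcal{A}(u)\neq\mathcal{A}(v)$ and $\sum_{S:\,e\in\delta(S)}y_S=\mathrm{cost}(e)$, GD does the following. It merges the two sets: $S=\mathcal{A}(u)\cup\mathcal{A}(v)$ becomes active and $\mathcal{A}(w)\leftarrow S$ for all $w\in S$, while $\mathcal{A}(u)$ and $\mathcal{A}(v)$ become inactive. It marks the edge $e$. Then, while there are free $u',v'\in S$ with $\mathrm{sgn}(u')=-\mathrm{sgn}(v')$, it matches $u'$ with $v'$ at the current time. - At all other times, $y_S$ increases continuously at rate $1$ (the same rate as time) for every active growing set $S$; all other dual variables stay constant. *)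

(* Defs.v *)
From HB Require Import structures.
From mathcomp Require Import all_boot all_order all_algebra.
Set Implicit Arguments. Unset Strict Implicit. Unset Printing Implicit Defensive.
Import Order.TTheory GRing.Theory Num.Theory.
Local Open Scope ring_scope.

Inductive problem := MPMD | MBPMD.

Definition is_metric (R : realFieldType) (X : Type) (dist : X -> X -> R) : Prop :=
  [/\ forall x y, 0 <= dist x y,
      forall x y, dist x y = 0 <-> x = y,
      forall x y, dist x y = dist y x &
      forall x y z, dist x z <= dist x y + dist y z].

Definition valid_signs (p : problem) (m : nat) (sgn : 'I_(m.*2) -> int) : Prop :=
  match p with
  | MPMD => forall u, sgn u = 0
  | MBPMD => (forall u, sgn u = 1 \/ sgn u = -1) /\ #|[set u | sgn u == 1]| = m
  end.

Section GD.
Variables (R : realFieldType) (X : Type) (dist : X -> X -> R) (p : problem)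
  (n : nat) (pos : 'I_n -> X) (atime : 'I_n -> R) (sgn : 'I_n -> int).

Definition sur (S : {set 'I_n}) : R :=
  match p with
  | MPMD => (odd #|S|)%:R
  | MBPMD => (absz (\sum_(u in S) sgn u))%:R
  end.

Definition is_edge (u v : 'I_n) : bool := (u != v) && (sgn u == - sgn v).

Definition cost (u v : 'I_n) : R := dist (pos u) (pos v) + `|atime u - atime v|.

Definition dual_lhs (y : {set 'I_n} -> R) (u v : 'I_n) : R :=
  \sum_(S : {set 'I_n} | (u \in S) != (v \in S)) y S.

(* State of GD: current time, number of arrived requests (requests arrive in
   index order), dual variables, active set A(u) of each request, matching. *)
Record state := mkState {
  clock : R;
  narr : nat;
  yv : {set 'I_n} -> R;
  act : 'I_n -> {set 'I_n};
  mate : 'I_n -> option 'I_n }.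

Definition arrived (s : state) (u : 'I_n) : bool := (u < narr s)%N.
Definition free (s : state) (u : 'I_n) : bool := mate s u == None.

Definition active (s : state) (S : {set 'I_n}) : bool :=
  [exists u, arrived s u && (act s u == S)].
Definition growing (s : state) (S : {set 'I_n}) : bool :=
  [exists w, (w \in S) && free s w].
Definition rate (s : state) (S : {set 'I_n}) : R :=
  if active s S && growing s S then 1 else 0.

Definition matchable (s : state) (u v : 'I_n) : bool :=
  [&& arrived s u, arrived s v, u != v, free s u, free s v,
      act s u == act s v & sgn u == - sgn v].
Definition settled (s : state) : Prop := forall u v, ~~ matchable s u v.

Definition tight_at (s : state) (y : {set 'I_n} -> R) (u v : 'I_n) : Prop :=
  [/\ arrived s u, arrived s v, is_edge u v, act s u != act s v &
      dual_lhs y u v = cost u v].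

Definition init : state :=
  mkState 0 0 (fun _ => 0) (fun _ => set0) (fun _ => None).

Inductive step : state -> state -> Prop :=
  | StArrive s :
      settled s -> (narr s < n)%N ->
      (forall k : 'I_n, val k = narr s -> atime k = clock s) ->
      step s (mkState (clock s) (narr s).+1 (yv s)
               (fun w => if val w == narr s then [set w] else act s w) (mate s))
  | StTight s u v :
      settled s -> tight_at s (yv s) u v ->
      step s (mkState (clock s) (narr s) (yv s)
               (fun w => if w \in act s u :|: act s v then act s u :|: act s v
                         else act s w) (mate s))
  | StMatch s u v :
      matchable s u v ->
      step s (mkState (clock s) (narr s) (yv s) (act s)
               (fun w => if w == u then Some v else if w == v then Some u
                         else mate s w))
  (* continuous growth during [clock, clock + d): no tight edge occurs and no
     request arrives strictly inside the interval *)
  | StGrow s (d : R) :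
      0 < d -> settled s ->
      (forall k : 'I_n, val k = narr s -> clock s + d <= atime k) ->
      (forall t, 0 <= t -> t < d -> forall u v,
          ~ tight_at s (fun S => yv s S + t * rate s S) u v) ->
      step s (mkState (clock s + d) (narr s) (fun S => yv s S + d * rate s S)
               (act s) (mate s)).

Inductive reachable : state -> Prop :=
  | Reach0 : reachable init
  | ReachS s s' : reachable s -> step s s' -> reachable s'.

Definition all_matched (s : state) : Prop := forall u, mate s u != None.

End GD.

(* Main.v *)
Require Import Defs.
From HB Require Import structures.
From mathcomp Require Import all_boot all_order all_algebra.
From mathcomp Require Import lra zify.
Set Implicit Arguments. Unset Strict Implicit. Unset Printing Implicit Defensive.
Import Order.TTheory GRing.Theory Num.Theory.
Local Open Scope ring_scope.

Section GDproof.
Variables (R : realFieldType) (X : Type) (dist : X -> X -> R) (p : problem)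
  (n : nat) (pos : 'I_n -> X) (atime : 'I_n -> R) (sgn : 'I_n -> int).
Hypothesis Hmetric : is_metric dist.
Hypothesis Hsg : p = MBPMD -> forall u, sgn u = 1 \/ sgn u = -1.
Hypothesis Hs0 : p = MPMD -> forall u, sgn u = 0.

Local Notation st := (state R n).

Definition Mm (s : st) : {set 'I_n} := [set w | mate s w != None].
Definition coef (A : {set 'I_n}) (u v : 'I_n) (S : {set 'I_n}) : R :=
  (S \subset A)%:R * (2 - (u \in S)%:R - (v \in S)%:R).
Definition bnd (s : st) u v : R := \sum_S yv s S * coef (act s u) u v S.

Lemma coef_ge0 A u v S : 0 <= coef A u v S.
Proof.
rewrite /coef; case: (S \subset A); case: (u \in S); case: (v \in S);
  rewrite /= ?mul0r ?mul1r //; lra.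
Qed.

Record Inv (s : st) : Prop := {
  iP1 : forall x, arrived s x -> x \in act s x;
  iP2 : forall x z, arrived s x -> z \in act s x -> arrived s z /\ act s z = act s x;
  iP4 : forall u v, mate s u = Some v -> [/\ arrived s u, arrived s v & act s u = act s v];
  iM : forall x, arrived s x -> ~~ odd #|act s x :&: Mm s| /\
                   \sum_(w in act s x :&: Mm s) sgn w = 0;
  iYn : forall S, 0 <= yv s S;
  iYs : forall S, yv s S != 0 -> [/\ S != set0,
          forall z, z \in S -> arrived s z /\ S \subset act s z &
          1 <= sur R p sgn S];
  iD : forall u v, arrived s u -> arrived s v -> act s u = act s v ->
          dist (pos u) (pos v) <= bnd s u v }.

Lemma bnd_ge0 s u v : (forall S, 0 <= yv s S) -> 0 <= bnd s u v.
Proof. move=> H; apply: sumr_ge0 => S _; apply: mulr_ge0 => //; exact: coef_ge0. Qed.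

Lemma dist0 x : dist x x = 0.
Proof. by case: Hmetric => _ H _ _; apply/H. Qed.

Lemma init_inv : Inv (init R n).
Proof.
split => //=.
- by move=> S; rewrite eqxx.
Qed.


Lemma arrive_inv s : Inv s ->
  Inv (mkState (clock s) (narr s).+1 (yv s)
               (fun w => if val w == narr s then [set w] else act s w) (mate s)).
Proof.
case=> P1 P2 P4 HM Yn Ys D.
have arrS (w : 'I_n) : arrived s w -> (val w == narr s) = false.
  by rewrite /arrived => H; apply/negbTE; rewrite neq_ltn H.
have arrN (w : 'I_n) : val w != narr s -> (w < (narr s).+1)%N -> arrived s w.
  by rewrite /arrived ltnS leq_eqVlt => /negbTE -> .
have arrO (w : 'I_n) : arrived s w -> (w < (narr s).+1)%N.
  by rewrite /arrived => H; apply: ltnW.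
have fresh (w : 'I_n) : val w == narr s -> mate s w = None.
  move=> /eqP Hw; case E: (mate s w) => [v|] //.
  by case: (P4 _ _ E); rewrite /arrived Hw ltnn.
split; rewrite /arrived /=.
- move=> x Hx; case: ifP => Ex; first by rewrite set11.
  by apply: P1; apply: arrN => //; rewrite Ex.
- move=> x z Hx; case: ifP => Ex.
    by rewrite inE => /eqP ->; rewrite Ex.
  have Ax : arrived s x by apply: arrN => //; rewrite Ex.
  move=> Hz; case: (P2 _ _ Ax Hz) => Az ->; by rewrite arrS // arrO.
- move=> u v E; case: (P4 _ _ E) => Au Av Euv.
  by rewrite !arrS // !arrO // Euv.
- move=> x Hx; case: ifP => Ex.
    have -> : [set x] :&: Mm s = set0.
      apply/setP => w; rewrite !inE; case: eqP => // ->.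
      by rewrite fresh.
    by rewrite cards0 big_set0.
  by apply: HM; apply: arrN => //; rewrite Ex.
- by [].
- move=> S /Ys [SN HS Hsur]; split => // z /HS [Az Sz].
  by rewrite arrS // arrO.
- move=> u v Hu Hv.
  case: ifP => Eu; case: ifP => Ev.
  + have -> : u = v by apply: ord_inj; move/eqP: Eu => ->; move/eqP: Ev => ->.
    by move=> _; rewrite dist0 //; apply: bnd_ge0.
  + move=> E; have Av : arrived s v by apply: arrN => //; rewrite Ev.
    have := P1 _ Av; rewrite -E inE => /eqP Evu.
    by move: Ev; rewrite Evu Eu.
  + move=> E; have Au : arrived s u by apply: arrN => //; rewrite Eu.
    have := P1 _ Au; rewrite E inE => /eqP Evu.
    by move: Eu; rewrite Evu Ev.
  + move=> E; have Au : arrived s u by apply: arrN => //; rewrite Eu.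
    have Av : arrived s v by apply: arrN => //; rewrite Ev.
    by rewrite /bnd /= Eu; apply: D.
Qed.


Lemma match_inv s u v : Inv s -> matchable sgn s u v ->
  Inv (mkState (clock s) (narr s) (yv s) (act s)
               (fun w => if w == u then Some v else if w == v then Some u
                         else mate s w)).
Proof.
case=> P1 P2 P4 HM Yn Ys D.
case/and5P => Au Av Nuv Fu /and3P [Fv /eqP Auv /eqP Suv].
split => //=.
- move=> w v'; case: eqP => [-> [<-]|_]; first by split.
  case: eqP => [-> [<-]|_]; first by split.
  exact: P4.
- move=> x Hx; have [Mx Sx] := HM _ Hx.
  rewrite /Mm /=.
  case: (boolP (u \in act s x)) => Ux.
  + have [_ Eu] := P2 _ _ Hx Ux.
    have Vx : v \in act s x by rewrite -Eu Auv; apply: P1.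
    have -> : act s x :&: [set w | (if w == u then Some v else if w == v then Some u
               else mate s w) != None] = u |: (v |: (act s x :&: Mm s)).
      apply/setP => w; rewrite !inE.
      case: (eqVneq w u) => [->|Hwu]; first by rewrite Ux.
      case: (eqVneq w v) => [->|Hwv]; first by rewrite Vx orbT.
      by [].
    have Hv : v \notin act s x :&: Mm s by rewrite !inE negb_and (eqP Fv) eqxx orbT.
    have Hu : u \notin v |: (act s x :&: Mm s).
      by rewrite !inE negb_or negb_and (eqP Fu) eqxx orbT andbT.
    rewrite cardsU1 Hu cardsU1 Hv /= negbK Mx.
    rewrite big_setU1 //= big_setU1 //= Sx Suv.
    split => //; lia.
  + have Vx : v \notin act s x.
      apply/negP => Vx; have [_ Ev] := P2 _ _ Hx Vx.
      by move: Ux; rewrite -Ev -Auv P1.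
    have -> : act s x :&: [set w | (if w == u then Some v else if w == v then Some u
               else mate s w) != None] = act s x :&: Mm s.
      apply/setP => w; rewrite !inE.
      case: (eqVneq w u) => [->|Hwu]; first by rewrite (negbTE Ux).
      case: (eqVneq w v) => [->|Hwv]; first by rewrite (negbTE Vx).
      by [].
    by split.
Qed.


Lemma sur_growing s x w : Inv s -> settled sgn s -> arrived s x ->
  w \in act s x -> mate s w = None -> 1 <= sur R p sgn (act s x).
Proof.
case=> P1 P2 P4 HM Yn Ys D Hset Ax Wx Fw.
have [Aw Ew] := P2 _ _ Ax Wx.
have HF f : f \in act s x :\: Mm s -> f != w -> ~~ (sgn f == - sgn w).
  rewrite !inE negbK => /andP [Ff Fx] Nfw.
  have [Af Ef] := P2 _ _ Ax Fx.
  have := Hset f w; rewrite /matchable Af Aw Nfw /Defs.free Ff Fw Ef Ew eqxx /=.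
  by [].
have wF : w \in act s x :\: Mm s by rewrite !inE Fw eqxx Wx.
have [Mx Sx] := HM _ Ax.
rewrite /sur; case Ep: p.
- have Fe : act s x :\: Mm s = [set w].
    apply/setP => f; rewrite inE; apply/idP/idP => [Hf|/eqP ->//].
    apply/negPn/negP => Nfw; have := HF f Hf Nfw.
    by rewrite (Hs0 Ep f) (Hs0 Ep w).
  rewrite -(cardsID (Mm s)) Fe cards1 oddD (negbTE Mx) /=.
  by rewrite lexx.
- have Hs : forall f, f \in act s x :\: Mm s -> sgn f = sgn w.
    move=> f Hf; case: (eqVneq f w) => [->//|Nfw].
    have := HF f Hf Nfw.
    by case: (Hsg Ep f) => ->; case: (Hsg Ep w) => ->.
  rewrite (big_setID (Mm s)) /= Sx add0r.
  rewrite (eq_bigr (fun _ => sgn w)) // sumr_const.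
  have -> : `|sgn w *+ #|act s x :\: Mm s| |%N = #|act s x :\: Mm s|.
    by case: (Hsg Ep w) => ->; rewrite ?mulNrn ?abszN natz.
  rewrite ler1n card_gt0.
  by apply/set0Pn; exists w.
Qed.


Lemma grow_inv s (d : R) : Inv s -> 0 < d -> settled sgn s ->
  Inv (mkState (clock s + d) (narr s) (fun S => yv s S + d * rate s S)
               (act s) (mate s)).
Proof.
move=> I0 d0 Hset; have I1 := I0; case: I1 => P1 P2 P4 HM Yn Ys D.
have r0 S : 0 <= rate s S by rewrite /rate; case: ifP.
split => //=.
- move=> S; apply: addr_ge0 => //; apply: mulr_ge0 => //; exact: ltW.
- move=> S; rewrite /rate; case: ifP => [/andP [/existsP [x /andP [Ax /eqP <-]]
      /existsP [w /andP [Wx Fw]]] _|_]; last by rewrite mulr0 addr0; apply: Ys.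
  split.
  + by apply/set0Pn; exists x; apply: P1.
  + by move=> z Hz; have [Az ->] := P2 _ _ Ax Hz; split.
  + apply: (sur_growing (w := w)) => //; exact/eqP.
- move=> u v Au Av Euv; apply: (le_trans (D _ _ Au Av Euv)).
  rewrite /bnd /=; apply: ler_sum => S _; apply: ler_wpM2r; first exact: coef_ge0.
  rewrite lerDl; apply: mulr_ge0 => //; exact: ltW.
Qed.


Lemma dsym x y : dist x y = dist y x.
Proof. by case: Hmetric. Qed.
Lemma dtri x y z : dist x z <= dist x y + dist y z.
Proof. by case: Hmetric. Qed.

Lemma coefC (A : {set 'I_n}) u v S : coef A u v S = coef A v u S.
Proof. by rewrite /coef; congr (_ * _); lra. Qed.

Lemma coef_mono (A1 A2 : {set 'I_n}) u v S : A1 \subset A2 -> coef A1 u v S <= coef A2 u v S.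
Proof.
move=> H; rewrite /coef; case E: (S \subset A1).
  by rewrite (subset_trans E H).
by rewrite mul0r; apply: mulr_ge0; [case: (S \subset A2)|
  case: (u \in S); case: (v \in S); rewrite /=; lra].
Qed.

Lemma cross s a b u v : Inv s -> arrived s a -> arrived s b -> act s a != act s b ->
  dist (pos a) (pos b) <= dual_lhs (yv s) a b ->
  u \in act s a -> v \in act s b ->
  dist (pos u) (pos v) <= \sum_S yv s S * coef (act s a :|: act s b) u v S.
Proof.
move=> I0 Aa Ab Nab Hab Ua Vb; have I1 := I0; case: I1 => P1 P2 P4 HM Yn Ys D.
have [Au Eu] := P2 _ _ Aa Ua.
have [Av Ev] := P2 _ _ Ab Vb.
have Dua := D _ _ Au Aa Eu.
have Dbv := D _ _ Ab Av (esym Ev).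
have disj t : t \in act s a -> t \in act s b -> False.
  move=> Ht1 Ht2; have [_ E1] := P2 _ _ Aa Ht1; have [_ E2] := P2 _ _ Ab Ht2.
  by move: Nab; rewrite -E1 -E2 eqxx.
apply: (le_trans (dtri _ (pos a) _)).
apply: (le_trans (lerD (lexx _) (dtri _ (pos b) _))).
apply: (le_trans (lerD Dua (lerD Hab Dbv))).
rewrite /bnd /dual_lhs [X in _ + (X + _)]big_mkcond /= Eu -!big_split /=.
apply: ler_sum => S _.
case: (eqVneq (yv s S) 0) => [->|yN].
  by rewrite !mul0r; case: ifP; rewrite !addr0 ?lexx.
have [SN HS _] := Ys _ yN.
have y0 := Yn S.
case/set0Pn: SN => z Sz.
have [Az SZ] := HS _ Sz.
have C1 : S \subset act s a -> [/\ b \in S = false, v \in S = false &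
             S \subset act s b = false].
  move=> SA; split; first by apply/negP => bS; apply: (disj b); [exact: (subsetP SA)|exact: P1].
  - by apply/negP => vS; apply: (disj v) => //; exact: (subsetP SA).
  - by apply/negP => SB; apply: (disj z); [exact: (subsetP SA)|exact: (subsetP SB)].
have C2 : S \subset act s b -> [/\ a \in S = false, u \in S = false &
             S \subset act s a = false].
  move=> SB; split; first by apply/negP => aS; apply: (disj a); [exact: P1|exact: (subsetP SB)].
  - by apply/negP => uS; apply: (disj u) => //; exact: (subsetP SB).
  - by apply/negP => SA; apply: (disj z); [exact: (subsetP SA)|exact: (subsetP SB)].
case: (boolP (z \in act s a)) => [Za|NZa].
  have [_ Ez] := P2 _ _ Aa Za.
  have SA : S \subset act s a by rewrite -Ez.
  have SC : S \subset act s a :|: act s b by apply: (subset_trans SA); apply: subsetUl.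
  rewrite /coef SA SC /=; have [-> -> ->] := C1 SA.
  by case: (a \in S); case: (u \in S); rewrite /=; lra.
case: (boolP (z \in act s b)) => [Zb|NZb].
  have [_ Ez] := P2 _ _ Ab Zb.
  have SB : S \subset act s b by rewrite -Ez.
  have SC : S \subset act s a :|: act s b by apply: (subset_trans SB); apply: subsetUr.
  rewrite /coef SB SC /=; have [-> -> ->] := C2 SB.
  by case: (b \in S); case: (v \in S); rewrite /=; lra.
have Nin t : t \in act s a :|: act s b -> t \in S -> False.
  move=> Ht tS; have [At Et] := P2 _ _ Az (subsetP SZ _ tS).
  case/setUP: Ht => Ht.
    have [_ E2] := P2 _ _ Aa Ht; by move: NZa; rewrite -E2 Et P1.
  have [_ E2] := P2 _ _ Ab Ht; by move: NZb; rewrite -E2 Et P1.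
have aS : a \in S = false by apply/negP; apply: Nin; rewrite inE P1.
have bS : b \in S = false by apply/negP; apply: Nin; rewrite inE P1 ?orbT.
have SA : S \subset act s a = false by apply/negP => SA; move: NZa; rewrite (subsetP SA).
have SB : S \subset act s b = false by apply/negP => SB; move: NZb; rewrite (subsetP SB).
rewrite aS bS /coef SA SB /= !mul0r !mulr0 !add0r.
apply: mulr_ge0 => //; apply: mulr_ge0; first by case: (_ \subset _).
by case: (u \in S); case: (v \in S); rewrite /=; lra.
Qed.


Lemma tight_inv s a b : Inv s -> tight_at dist pos atime sgn s (yv s) a b ->
  Inv (mkState (clock s) (narr s) (yv s)
               (fun w => if w \in act s a :|: act s b then act s a :|: act s b
                         else act s w) (mate s)).
Proof.
move=> I0 [Aa Ab _ Nab Htight]; have I1 := I0; case: I1 => P1 P2 P4 HM Yn Ys D.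
set C := act s a :|: act s b.
have disj t : t \in act s a -> t \in act s b -> False.
  move=> Ht1 Ht2; have [_ E1] := P2 _ _ Aa Ht1; have [_ E2] := P2 _ _ Ab Ht2.
  by move: Nab; rewrite -E1 -E2 eqxx.
have inCE z : arrived s z -> (z \in C) = (act s z == act s a) || (act s z == act s b).
  move=> Az; rewrite /C inE; apply/idP/idP.
    case/orP => Hz; [have [_ ->] := P2 _ _ Aa Hz|have [_ ->] := P2 _ _ Ab Hz];
      by rewrite eqxx ?orbT.
  by case/orP => /eqP <-; rewrite P1 ?orbT.
have actC z : arrived s z -> z \in C -> act s z \subset C.
  move=> Az; rewrite inCE // => /orP [] /eqP ->; [exact: subsetUl|exact: subsetUr].
have sameC x z : arrived s x -> z \in act s x -> (z \in C) = (x \in C).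
  move=> Ax Hz; have [Az Ez] := P2 _ _ Ax Hz; by rewrite !inCE // Ez.
have Hab : dist (pos a) (pos b) <= dual_lhs (yv s) a b.
  by rewrite Htight /cost lerDl.
split; rewrite /=.
- move=> x Ax; case: ifP => // _; exact: P1.
- move=> x z Ax; case: ifP => Hx.
    move=> Hz; case/setUP: Hz => Hz.
      have [Az _] := P2 _ _ Aa Hz; split => //.
      by rewrite (_ : z \in C) // /C inE Hz.
    have [Az _] := P2 _ _ Ab Hz; split => //.
    by rewrite (_ : z \in C) // /C inE Hz orbT.
  move=> Hz; have [Az Ez] := P2 _ _ Ax Hz; by rewrite (sameC x z) // Hx.
- move=> u v E; have [Au Av Euv] := P4 _ _ E.
  by rewrite !inCE // Euv.
- move=> x Ax; case: ifP => Hx; last exact: HM.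
  have [Ma Sa] := HM _ Aa; have [Mb Sb] := HM _ Ab.
  have E1 : C :&: Mm s :&: act s a = act s a :&: Mm s.
    apply/setP => t; rewrite !inE; case: (boolP (t \in act s a)) => Ht;
      by rewrite ?andbT ?andbF // Ht.
  have E2 : C :&: Mm s :\: act s a = act s b :&: Mm s.
    apply/setP => t; rewrite !inE; case: (boolP (t \in act s a)) => Ht /=.
      case: (boolP (t \in act s b)) => Hb //=; exfalso; exact: (disj t).
    by rewrite andbC.
  split.
    by rewrite -(cardsID (act s a)) E1 E2 oddD (negbTE Ma) (negbTE Mb).
  by rewrite (big_setID (act s a)) /= E1 E2 Sa Sb addr0.
- by [].
- move=> S /Ys [SN HS Hsur]; split => // z /HS [Az SZ]; split => //.
  case: ifP => Hz //; exact: (subset_trans SZ (actC _ Az Hz)).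
- move=> u v Au Av; rewrite /bnd /=.
  case: ifP => Hu; case: ifP => Hv.
  + move=> _.
    have [xu Au' Eu'] : exists2 x, x \in [:: a; b] & act s u = act s x.
      by move: Hu; rewrite inCE // => /orP [] /eqP ->; [exists a|exists b];
        rewrite ?inE ?eqxx ?orbT.
    have [xv Av' Ev'] : exists2 x, x \in [:: a; b] & act s v = act s x.
      by move: Hv; rewrite inCE // => /orP [] /eqP ->; [exists a|exists b];
        rewrite ?inE ?eqxx ?orbT.
    case: (eqVneq (act s u) (act s v)) => Euv.
      apply: (le_trans (D _ _ Au Av Euv)); rewrite /bnd.
      apply: ler_sum => S _; apply: ler_wpM2l => //; apply: coef_mono.
      exact: actC.
    move: Au' Av' Euv; rewrite !inE => /orP [] /eqP Hu' /orP [] /eqP Hv';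
      rewrite Eu' Ev' Hu' Hv' ?eqxx // => _.
    * apply: cross => //; [by rewrite -Hu' -Eu' P1|by rewrite -Hv' -Ev' P1].
    * have -> : \sum_S yv s S * coef C u v S =
                \sum_S yv s S * coef (act s b :|: act s a) u v S.
        by apply: eq_bigr => S _; rewrite /C setUC.
      apply: cross => //.
      - by rewrite eq_sym.
      - have -> : dual_lhs (yv s) b a = dual_lhs (yv s) a b.
          by apply: eq_bigl => S; rewrite eq_sym.
        by rewrite dsym.
      - by rewrite -Hu' -Eu' P1.
      - by rewrite -Hv' -Ev' P1.
  + by move=> E; move: Hv; rewrite E (P1 _ Av).
  + by move=> E; move: Hu; rewrite -E (P1 _ Au).
  + exact: D.
Qed.


Lemma reach_inv s : reachable dist pos atime sgn s -> Inv s.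
Proof.
elim=> [|s0 s1 _ IH st01]; first exact: init_inv.
case: st01 IH.
- by move=> s' _ _ _ I; apply: arrive_inv.
- by move=> s' a b _ Ht I; apply: tight_inv.
- by move=> s' a b Hm I; apply: match_inv.
- by move=> s' d d0 Hs _ _ I; apply: grow_inv.
Qed.

Lemma coef_le2 A u v S : coef A u v S <= 2.
Proof.
rewrite /coef; case: (S \subset A); case: (u \in S); case: (v \in S);
  rewrite /= ?mul0r ?mul1r //; lra.
Qed.

Lemma final_bound s u v : Inv s -> mate s u = Some v ->
  dist (pos u) (pos v) <= 2 * \sum_S sur R p sgn S * yv s S.
Proof.
move=> I0 E; have I1 := I0; case: I1 => P1 P2 P4 HM Yn Ys D.
have [Au Av Euv] := P4 _ _ E.
apply: (le_trans (D _ _ Au Av Euv)); rewrite /bnd mulr_sumr.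
apply: ler_sum => S _.
case: (eqVneq (yv s S) 0) => [->|yN]; first by rewrite !mulr0 mul0r.
have [_ _ Hs] := Ys _ yN; have y0 := Yn S; have c2 := coef_le2 (act s u) u v S.
nra.
Qed.

End GDproof.

Theorem lemma7 (R : realFieldType) (X : Type) (dist : X -> X -> R)
  (p : problem) (m : nat) (pos : 'I_(m.*2) -> X) (atime : 'I_(m.*2) -> R)
  (sgn : 'I_(m.*2) -> int)
  (Hmetric : is_metric dist)
  (Hnonneg : forall u, 0 <= atime u)
  (Hmono : forall u v : 'I_(m.*2), (u <= v)%N -> atime u <= atime v)
  (Hsgn : valid_signs p sgn)
  (s : state R (m.*2))
  (Hreach : reachable dist pos atime sgn s)
  (Hdone : all_matched s) :
  forall u v, mate s u = Some v ->
    dist (pos u) (pos v) <= 2 * \sum_(S : {set 'I_(m.*2)}) @sur R p _ sgn S * yv s S.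
Proof.
have Hsg : p = MBPMD -> forall u, sgn u = 1 \/ sgn u = -1.
  by move=> Ep; move: Hsgn; rewrite Ep => -[].
have Hs0 : p = MPMD -> forall u, sgn u = 0.
  by move=> Ep; move: Hsgn; rewrite Ep.
move=> u v E.
eapply final_bound; last exact: E.
by eapply reach_inv; eauto.
Qed.
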